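(* $\mathcal D=\Phi^{-1}(\mathbf 1)^+$, where $\Phi^{-1}(\mathbf 1)^+$ is the set of $p\times p$ diagonal matrices $D$ with $D_{ii}>0$ for all $i$ and $\Phi\big((D_{ii})_{i=1}^p\big)=\mathbf 1\in\mathbb{R}^q$.
   Context: Let $\mathcal G=(V,E)$ be a finite directed acyclic graph. Input neurons $N_{\mathrm{in}}$ have no incoming edges, output neurons $N_{\mathrm{out}}$ no outgoing edges, hidden neurons $\mathcal H=V\setminus(N_{\mathrm{in}}\cup N_{\mathrm{out}})$. The parameter vector $\theta\in\mathbb{R}^p$ consists of one weight $\theta_{u\to v}$ per edge $(u,v)\in E$ and one bias $b_v$ per non-input neuron $v$. For $v\in\mathcal H$, $\mathrm{in}_v$ is the set of indices of $b_v$ and of the weights $\theta_{u\to v}$, and $\mathrm{out}_v$ the set of indices of the weights $\theta_{v\to u}$. For $v\in\mathcal H$, $\lambda>0$, $D_{\lambda,v}$ is the diagonal $p\times p$ matrix with entry $\lambda$ on $\mathrm{in}_v$, $1/\lambda$ on $\mathrm{out}_v$, $1$ elsewhere; $\mathcal D$ is the group generated by all $D_{\lambda,v}$. A path is a sequence of neurons $v_0\to\cdots\to v_d$ ($d\ge0$) whose consecutive pairs are edges, with $v_d\in N_{\mathrm{out}}$ (for $d=0$, $v_0\notin N_{\mathrm{in}}$); $\mathrm P$ is the set of paths, $q=|\mathrm P|$. The path-lifting $\Phi:\mathbb{R}^p\to\mathbb{R}^q$ is $\Phi_{\mathrm p}(\theta)=\prod_{\ell=1}^d\theta_{v_{\ell-1}\to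 v_\ell}$ if $v_0\in N_{\mathrm{in}}$ and $\Phi_{\mathrm p}(\theta)=b_{v_0}\prod_{\ell=1}^d\theta_{v_{\ell-1}\to v_\ell}$ otherwise (empty product $=1$). For a diagonal matrix $D$, $\Phi(D)$ means $\Phi$ applied to the vector of its diagonal entries. *)

(* Defs.v *)
From HB Require Import structures.
From mathcomp Require Import all_boot all_order all_algebra.
Set Implicit Arguments. Unset Strict Implicit. Unset Printing Implicit Defensive.
Import Order.TTheory GRing.Theory Num.Theory.
Local Open Scope ring_scope.

Section DAGNet.
Variables (V : finType) (E : rel V).

Definition acyclic : Prop := forall u v, E u v -> ~~ connect E v u.

Definition is_input (v : V) : bool := [forall u, ~~ E u v].
Definition is_output (v : V) : bool := [forall u, ~~ E v u].
Definition is_hidden (v : V) : bool := ~~ is_input v && ~~ is_output v.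

(* parameter indices: one weight per edge, one bias per non-input neuron *)
Definition edge_t := {e : V * V | E e.1 e.2}.
Definition bias_t := {v : V | ~~ is_input v}.
Definition Idx : finType := (edge_t + bias_t)%type.
Definition p : nat := #|Idx|.

Definition in_idx (v : V) (k : Idx) : bool :=
  match k with
  | inl e => (val e).2 == v
  | inr b => val b == v
  end.
Definition out_idx (v : V) (k : Idx) : bool :=
  match k with
  | inl e => (val e).1 == v
  | inr _ => false
  end.

Variable R : realFieldType.

Definition resc_entry (lam : R) (v : V) (k : Idx) : R :=
  if in_idx v k then lam else if out_idx v k then lam^-1 else 1.

(* the p x p diagonal matrix D_{lambda,v}; parameter k sits at position enum_rank k *)
Definition Dresc (lam : R) (v : V) : 'M[R]_p :=
  diag_mx (\row_(i < p) resc_entry lam v (enum_val i)).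

Inductive in_D : 'M[R]_p -> Prop :=
  | inD_gen lam v : 0 < lam -> is_hidden v -> in_D (Dresc lam v)
  | inD_one : in_D 1%:M
  | inD_mul A B : in_D A -> in_D B -> in_D (A *m B)
  | inD_inv A : in_D A -> in_D (invmx A).

Definition weight (theta : Idx -> R) (u w : V) : R :=
  match @insub _ (fun e : V * V => E e.1 e.2) edge_t (u, w) with
  | Some e => theta (inl e)
  | None => 0
  end.
Definition bias (theta : Idx -> R) (v : V) : R :=
  match @insub _ (fun x : V => ~~ is_input x) bias_t v with
  | Some b => theta (inr b)
  | None => 0
  end.

Definition is_netpath (s : seq V) : bool :=
  match s with
  | [::] => false
  | v0 :: rest =>
      [&& path E v0 rest, is_output (last v0 rest)
        & (rest != [::]) || ~~ is_input v0]
  end.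
Definition netpath := {s : seq V | is_netpath s}.

Definition Phi_seq (theta : Idx -> R) (s : seq V) : R :=
  match s with
  | [::] => 0
  | v0 :: rest =>
      (if is_input v0 then 1 else bias theta v0) *
      \prod_(uw <- zip (v0 :: rest) rest) weight theta uw.1 uw.2
  end.

(* path-lifting Phi : R^p -> R^q, coordinates indexed by paths *)
Definition Phi (theta : Idx -> R) (P : netpath) : R := Phi_seq theta (val P).

Definition diag_vec (D : 'M[R]_p) : Idx -> R :=
  fun k => D (enum_rank k) (enum_rank k).

End DAGNet.

(* Main.v *)
Require Import Defs.
From HB Require Import structures.
From mathcomp Require Import all_boot all_order all_algebra.
From mathcomp Require Import ring.
Set Implicit Arguments. Unset Strict Implicit. Unset Printing Implicit Defensive.
Import Order.TTheory GRing.Theory Num.Theory.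
Local Open Scope ring_scope.

Section H.
Variables (V : finType) (E : rel V) (R : realFieldType).
Hypothesis hE : acyclic E.

Lemma weight_edge (t : Idx E -> R) a b (h : E a b) :
  weight t a b = t (inl (exist _ (a, b) h)).
Proof. by rewrite /weight insubT. Qed.

Lemma weight_ext (t1 t2 : Idx E -> R) a b :
  (forall k, t1 k = t2 k) -> weight t1 a b = weight t2 a b.
Proof. by move=> h; rewrite /weight; case: insub. Qed.

Lemma bias_ext (t1 t2 : Idx E -> R) a :
  (forall k, t1 k = t2 k) -> bias t1 a = bias t2 a.
Proof. by move=> h; rewrite /bias; case: insub. Qed.

Lemma Phi_seq_ext (t1 t2 : Idx E -> R) s :
  (forall k, t1 k = t2 k) -> Phi_seq t1 s = Phi_seq t2 s.
Proof.
move=> h; case: s => [|v0 r] //=; rewrite (bias_ext _ h).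
by congr (_ * _); apply: eq_bigr => uw _; apply: weight_ext.
Qed.

Lemma Phi_seq_mul (t1 t2 : Idx E -> R) s :
  Phi_seq (fun k => t1 k * t2 k) s = Phi_seq t1 s * Phi_seq t2 s.
Proof.
case: s => [|v0 r] /=; first by rewrite mulr0.
have hw : forall a b, weight (fun k => t1 k * t2 k) a b = weight t1 a b * weight t2 a b.
  by move=> a b; rewrite /weight; case: insub => //; rewrite mulr0.
have hb : bias (fun k => t1 k * t2 k) v0 = bias t1 v0 * bias t2 v0.
  by rewrite /bias; case: insub => //; rewrite mulr0.
rewrite hb (eq_bigr _ (fun uw _ => hw uw.1 uw.2)) big_split /=.
by case: ifP => _; rewrite ?mul1r; ring.
Qed.

Lemma Phi_seq_inv (t : Idx E -> R) s :
  Phi_seq (fun k => (t k)^-1) s = (Phi_seq t s)^-1.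
Proof.
case: s => [|v0 r] /=; first by rewrite invr0.
have hw : forall a b, weight (fun k => (t k)^-1) a b = (weight t a b)^-1.
  by move=> a b; rewrite /weight; case: insub => //; rewrite invr0.
have hb : bias (fun k => (t k)^-1) v0 = (bias t v0)^-1.
  by rewrite /bias; case: insub => //; rewrite invr0.
rewrite hb (eq_bigr _ (fun uw _ => hw uw.1 uw.2)) prodfV invfM.
by case: ifP => _; rewrite ?invr1.
Qed.

Lemma no_loop a b : E a b -> a != b.
Proof. by move=> h; apply/eqP => eab; move: (hE h); rewrite eab connect0. Qed.

Lemma Phi_resc lam v (P : netpath E) : 0 < lam -> is_hidden E v ->
  Phi_seq (@resc_entry _ E R lam v) (val P) = 1.
Proof.
move=> lam0 hv; case: P => [[|v0 rest]] //= /and3P [hp hout hne].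
pose f x : R := if x == v then lam else 1.
have fn0 : forall x, f x != 0 by move=> x; rewrite /f; case: ifP => _; rewrite ?oner_eq0 // gt_eqF.
have tele : forall r x, path E x r ->
  \prod_(uw <- zip (x :: r) r) weight (@resc_entry _ E R lam v) uw.1 uw.2 = f (last x r) / f x.
  elim=> [|y r IH] x /=; first by rewrite big_nil divff.
  move=> /andP [exy py]; rewrite big_cons IH //= (weight_edge _ exy).
  rewrite /resc_entry /= /f.
  have nxy := no_loop exy.
  have fy0 := fn0 y; have fx0 := fn0 x; move: fy0 fx0; rewrite /f.
  case: (eqVneq y v) => [eyv|nyv]; case: (eqVneq x v) => [exv|nxv].
  - by move: nxy; rewrite eyv exv eqxx.
  - by move=> *; field.
  - by move=> *; field.
  - by move=> *; field.
rewrite tele //.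
move/andP: hv => [hvi hvo].
have fl : f (last v0 rest) = 1.
  rewrite /f; case: eqP => // el; by move: hvo; rewrite -el hout.
rewrite fl; case: ifP => hin.
  have -> : f v0 = 1 by rewrite /f; case: eqP => // e; move: hvi; rewrite -e hin.
  by rewrite divr1 mul1r.
have -> : bias (@resc_entry _ E R lam v) v0 = f v0.
  by rewrite /bias insubT ?hin //= /resc_entry /=.
by rewrite mul1r mulfV.
Qed.

Lemma reach v : exists s, path E v s && is_output E (last v s).
Proof.
have: forall n v, (#|[pred x | connect E v x]| < n)%N -> exists s, path E v s && is_output E (last v s).
  elim=> [|n IH] {}v //= hn.
  case ho: (is_output E v); first by exists [::]; rewrite /= ho.
  move/negbT: ho; rewrite /is_output negb_forall => /existsP [u]; rewrite negbK => evu.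
  have [s hs] : exists s, path E u s && is_output E (last u s).
    apply: IH; rewrite -ltnS; apply: leq_trans hn; apply: proper_card.
    apply/properP; split.
      apply/subsetP => x; rewrite !inE => hux; exact: connect_trans (connect1 evu) hux.
    by exists v; rewrite !inE ?connect0 //; exact: hE evu.
  by exists (u :: s); rewrite /= evu.
by move=> h; exact: h _ v (ltnSn _).
Qed.

Lemma Phi_one (P : netpath E) : Phi_seq (fun _ : Idx E => (1 : R)) (val P) = 1.
Proof.
case: P => [[|v0 rest]] //= /and3P [hp _ _].
have tele : forall r x, path E x r ->
  \prod_(uw <- zip (x :: r) r) weight (fun _ : Idx E => (1 : R)) uw.1 uw.2 = 1.
  elim=> [|y r IH] x /=; first by rewrite big_nil.
  by move=> /andP [exy py]; rewrite big_cons IH // (weight_edge _ exy) mulr1.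
rewrite tele // mulr1; case: ifP => // hin.
by rewrite /bias insubT ?hin.
Qed.

Definition Inv (D : 'M[R]_(p E)) := exists d : 'rV[R]_(p E),
  [/\ D = diag_mx d, forall i, 0 < d 0 i &
      forall P : netpath E, Phi (fun k => d 0 (enum_rank k)) P = 1].

Lemma Inv_in_D D : in_D D -> Inv D.
Proof.
elim=> {D}.
- move=> lam v lam0 hv; exists (\row_i resc_entry lam v (enum_val i)); split => //.
    move=> i; rewrite mxE /resc_entry; case: ifP => _ //; case: ifP => _ //.
    by rewrite invr_gt0.
  move=> P; rewrite /Phi -(Phi_resc P lam0 hv); apply: Phi_seq_ext => k.
  by rewrite mxE enum_rankK.
- exists (const_mx 1); split; first by rewrite diag_const_mx.
    by move=> i; rewrite mxE.
  move=> P; rewrite /Phi -[RHS](Phi_one P); apply: Phi_seq_ext => k.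
  by rewrite mxE.
- move=> A B _ [dA [-> pA hA]] _ [dB [-> pB hB]].
  exists (\row_j (dA 0 j * dB 0 j)); split; first by rewrite mulmx_diag.
    by move=> i; rewrite mxE mulr_gt0.
  move=> P; rewrite /Phi (@Phi_seq_ext _ (fun k => dA 0 (enum_rank k) * dB 0 (enum_rank k))).
    by rewrite Phi_seq_mul; move: (hA P) (hB P); rewrite /Phi => -> ->; rewrite mulr1.
  by move=> k; rewrite mxE.
- move=> A _ [d [-> pd hd]].
  exists (\row_j (d 0 j)^-1); split.
  + have h1 : diag_mx d *m diag_mx (\row_j (d 0 j)^-1) = 1%:M.
      rewrite mulmx_diag -diag_const_mx; congr diag_mx; apply/matrixP => i j.
      by rewrite !mxE mulfV // gt_eqF.
    have [u1 _] := mulmx1_unit h1.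
    by rewrite -[invmx _]mulmx1 -h1 mulmxA mulVmx // mul1mx.
  + by move=> i; rewrite mxE invr_gt0.
  move=> P; rewrite /Phi (@Phi_seq_ext _ (fun k => (d 0 (enum_rank k))^-1)).
    by rewrite Phi_seq_inv; move: (hd P); rewrite /Phi => ->; rewrite invr1.
  by move=> k; rewrite mxE.
Qed.

Lemma prod_single (hs : seq V) (h : V -> R) w :
  hs = enum [pred v | is_hidden E v] ->
  \prod_(v <- hs) (if w == v then h v else 1) = if is_hidden E w then h w else 1.
Proof.
move=> ->; rewrite big_enum /= big_mkcond (bigD1 w) //= eqxx big1 ?mulr1.
  by rewrite inE.
by move=> v nvw; rewrite eq_sym (negPf nvw); case: ifP.
Qed.

Lemma foldr_diag (lam : V -> R) (s : seq V) :
  (forall v, v \in s -> 0 < lam v /\ is_hidden E v) ->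
  let M := foldr (fun v M => Dresc E (lam v) v *m M) 1%:M s in
  in_D M /\ M = diag_mx (\row_i \prod_(v <- s) resc_entry (lam v) v (enum_val i)).
Proof.
elim: s => [|v s IH] hs /=.
  split; first exact: inD_one.
  rewrite -diag_const_mx; congr diag_mx; apply/matrixP => i j; by rewrite !mxE big_nil.
have [IH1 IH2] := IH (fun x hx => hs x (mem_behead (s:=v :: s) hx)).
have [l0 hv] := hs v (mem_head _ _).
split; first by apply: inD_mul => //; exact: inD_gen.
rewrite IH2 /Dresc mulmx_diag; congr diag_mx; apply/matrixP => i j.
by rewrite !mxE big_cons.
Qed.

Lemma key (D : 'M[R]_(p E)) (hpos : forall i, 0 < D i i)
  (hP : forall P : netpath E, Phi (diag_vec D) P = 1) (k : Idx E) :
  diag_vec D k = \prod_(v <- enum [pred v | is_hidden E v])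
                   resc_entry (bias (diag_vec D) v) v k.
Proof.
set th := diag_vec D; set lam := bias th.
have thpos : forall k, 0 < th k by move=> k'; exact: hpos.
have lampos : forall w, ~~ is_input E w -> 0 < lam w.
  by move=> w hw; rewrite /lam /bias insubT.
pose g w := if is_hidden E w then lam w else 1.
have G : forall w, ~~ is_input E w -> lam w = g w.
  move=> w hw; rewrite /g; case: ifP => // hh.
  have ho : is_output E w by move: hh; rewrite /is_hidden hw /= => /negbFE.
  have hn : is_netpath E [:: w] by rewrite /= ho hw.
  have := hP (exist _ [:: w] hn); rewrite /Phi /= (negPf hw) big_nil mulr1 //.
case: k => [[[a b] hab]|[w hw]].
  rewrite /resc_entry /=.
  have nab := no_loop hab.
  rewrite (eq_bigr (fun v => (if b == v then lam v else 1) * (if a == v then (lam v)^-1 else 1))); last first.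
    move=> v _; case: (eqVneq b v) => [ebv|nbv]; case: (eqVneq a v) => [eav|nav];
      rewrite ?mulr1 ?mul1r //.
    by move: nab; rewrite eav ebv eqxx.
  rewrite big_split /= (prod_single lam b erefl) (prod_single (fun v => (lam v)^-1) a erefl) /=.
  have bni : ~~ is_input E b by rewrite /is_input negb_forall; apply/existsP; exists a; rewrite hab.
  have ano : ~~ is_output E a by rewrite /is_output negb_forall; apply/existsP; exists b; rewrite hab.
  have [pi /andP [hpi hout]] := reach b.
  pose Q := \prod_(uw <- zip (b :: pi) pi) weight th uw.1 uw.2.
  have n1 : is_netpath E (b :: pi) by rewrite /= hpi hout bni orbT.
  have n2 : is_netpath E (a :: b :: pi) by rewrite /= hab hpi hout.
  have e1 := hP (exist _ (b :: pi) n1); have e2 := hP (exist _ (a :: b :: pi) n2).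
  rewrite /Phi /= (negPf bni) -/Q in e1.
  rewrite /Phi /= big_cons /= -/Q (weight_edge _ hab) in e2.
  rewrite -/(g b) -(G b bni).
  have hl := lampos b bni.
  have Qe : Q = (lam b)^-1.
    by apply: (mulfI (x := lam b)); rewrite ?gt_eqF // e1 mulfV ?gt_eqF.
  rewrite Qe in e2.
  set x := th _ in e2 *.
  have hb0 : lam b != 0 by rewrite gt_eqF.
  case hin: (is_input E a) e2 => e2.
    rewrite /is_hidden hin /= mulr1.
    transitivity ((1 * (x * (lam b)^-1)) * lam b); first by field.
    by rewrite e2 mul1r.
  have ha0 : lam a != 0 by rewrite gt_eqF // lampos ?hin.
  rewrite /is_hidden hin ano /=.
  transitivity ((lam a * (x * (lam b)^-1)) * lam b / lam a).
    by field; rewrite ha0 hb0.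
  by rewrite e2 mul1r.
rewrite /resc_entry /=.
rewrite (eq_bigr (fun v => if w == v then lam v else 1)); last by move=> v _; case: ifP.
rewrite (prod_single lam w erefl) -/(g w) -G //.
by rewrite /th /lam /bias (insubT (fun x => ~~ is_input E x) hw).
Qed.
End H.

Theorem lemmaD7 (V : finType) (E : rel V) (R : realFieldType)
  (hE : acyclic E) (D : 'M[R]_(p E)) :
  in_D D <->
  [/\ is_diag_mx D, (forall i, 0 < D i i)
    & (forall P : netpath E, Phi (diag_vec D) P = 1)].
Proof.
split.
  move=> hD; have [d [-> pd hd]] := Inv_in_D hE hD.
  split; first exact: diag_mx_is_diag.
    by move=> i; rewrite mxE eqxx mulr1n.
  move=> P; rewrite -(hd P) /Phi; apply: Phi_seq_ext => k.
  by rewrite /diag_vec mxE eqxx mulr1n.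
move=> [hdiag hpos hP].
set lam := bias (diag_vec D).
have hpl : forall v, v \in enum [pred v | is_hidden E v] -> 0 < lam v /\ is_hidden E v.
  move=> v hv; have hh : is_hidden E v by move: hv; rewrite mem_enum inE.
  have hni : ~~ is_input E v by move: hh => /andP [].
  split => //; rewrite /lam /bias (insubT (fun x => ~~ is_input E x) hni); exact: hpos.
have [hin heq] := @foldr_diag V E R lam (enum [pred v | is_hidden E v]) hpl.
suff -> : D = foldr (fun v M => Dresc E (lam v) v *m M) 1%:M (enum [pred v | is_hidden E v]) by [].
rewrite heq; apply/matrixP => i j; rewrite mxE.
case: (eqVneq i j) => [<-|nij].
  by rewrite ?eqxx ?mulr1n mxE -(key hE hpos hP) /diag_vec enum_valK.
by rewrite mulr0n; move/is_diag_mxP: hdiag; apply; rewrite (inj_eq val_inj).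
Qed.
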